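(* Let $D\subset\mathbb R^n$ be a domain, $\mathcal D=(0,1)\times D$, $|c|<(n+1)\pi/2$, and suppose $u\in\mathcal F_c(\mathcal D)$. Then for each $t_0\in(0,1)$ the function $u(t_0,\cdot)$ belongs to $F_{c-\pi/2}(D)$.
   Context: $F_c=\{A\in\mathrm{Sym}(\mathbb R^n):\mathrm{tr}\tan^{-1}(A)\ge c\}$ ($\tan^{-1}\in(-\pi/2,\pi/2)$ via eigenvalues). For $A\in\mathrm{Sym}(\mathbb R^{n+1})$ (indices $0..n$, $t$ the $0$-th coordinate), $A^+$ is the lower right $n\times n$ block, $I_n=\mathrm{diag}(0,1,\dots,1)$, $\mathcal S=\{A=\mathrm{diag}(0,A^+)\}$, $\arg\in(-\pi,\pi]$; $\widetilde\Theta(A)=\sum_{\lambda\in\mathrm{spec}(I_n+\sqrt{-1}A)}m(\lambda)\arg\lambda$ for $A\notin\mathcal S$ (algebraic multiplicities), $\widetilde\Theta(A)=\pi/2+\mathrm{tr}\tan^{-1}(A^+)$ for $A\in\mathcal S$; $\mathcal F_c=\{A:\widetilde\Theta(A)\ge c\}$. For $F\subset\mathrm{Sym}(\mathbb R^m)$ with dual $\widetilde F=\mathrm{Sym}(\mathbb R^m)\setminus(-\mathrm{Int}F)$ and open $X$: upper semicontinuous $u$ is subaffine if for all compact $K\subset X$ and affine $a$, $u\le a$ on $\partial K$ implies $u\le a$ on $K$; $u\in F(X)$ if $u$ is upper semicontinuous and $u+v$ is subaffine for every $v\in C^2(X)$ with $\nabla^2v\in\widetilde F$ everywhere. *)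

(* Defs.v *)
From mathcomp Require Import all_boot all_fingroup.
From Stdlib Require Import Reals.
Set Implicit Arguments. Unset Strict Implicit.
Open Scope R_scope.

Definition vec (m : nat) := 'I_m -> R.
Definition mat (m : nat) := 'I_m -> 'I_m -> R.

Definition sumR (m : nat) (f : 'I_m -> R) : R := \big[Rplus/R0]_(i < m) f i.

Definition symmetric (m : nat) (A : mat m) : Prop := forall i j, A i j = A j i.

Definition idm (m : nat) : mat m := fun i j => if i == j then R1 else R0.

Definition detR (m : nat) (A : mat m) : R :=
  \big[Rplus/R0]_(s : 'S_m)
     ((if odd_perm s then -1 else 1) * \big[Rmult/R1]_(i < m) A i (s i)).

(* lam lists the eigenvalues of A with algebraic multiplicities:
   det(z I - A) = prod_k (z - lam_k) as polynomials (i.e. for all z) *)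
Definition is_eigs_R (m : nat) (A : mat m) (lam : 'I_m -> R) : Prop :=
  forall z : R, detR (fun i j => z * idm i j - A i j)
                = \big[Rmult/R1]_(k < m) (z - lam k).

Definition C := (R * R)%type.
Definition Cadd (a b : C) : C := (fst a + fst b, snd a + snd b).
Definition Cmul (a b : C) : C :=
  (fst a * fst b - snd a * snd b, fst a * snd b + snd a * fst b).
Definition Copp (a : C) : C := (- fst a, - snd a).
Definition C0 : C := (R0, R0).
Definition C1 : C := (R1, R0).
Definition cmat (m : nat) := 'I_m -> 'I_m -> C.

Definition detC (m : nat) (M : cmat m) : C :=
  \big[Cadd/C0]_(s : 'S_m)
     Cmul (if odd_perm s then Copp C1 else C1) (\big[Cmul/C1]_(i < m) M i (s i)).

(* mu lists the (complex) eigenvalues of M with algebraic multiplicities *)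
Definition is_eigs_C (m : nat) (M : cmat m) (mu : 'I_m -> C) : Prop :=
  forall z : C, detC (fun i j => Cadd (if i == j then z else C0) (Copp (M i j)))
                = \big[Cmul/C1]_(k < m) Cadd z (Copp (mu k)).

(* principal argument, with values in (-pi, pi]; (arg 0 := 0, never used) *)
Definition Carg (z : C) : R :=
  let x := fst z in let y := snd z in
  if Rlt_dec 0 x then atan (y / x)
  else if Rlt_dec x 0 then
    (if Rle_dec 0 y then atan (y / x) + PI else atan (y / x) - PI)
  else if Rlt_dec 0 y then PI / 2
  else if Rlt_dec y 0 then - (PI / 2) else 0.

(* F_c = { A in Sym(R^m) : tr tan^{-1}(A) >= c } *)
Definition Fc (m : nat) (c : R) (A : mat m) : Prop :=
  symmetric A /\
  exists lam, is_eigs_R A lam /\ c <= sumR (fun i => atan (lam i)).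

(* matrices on R^{n+1}, index ord0 = the t-coordinate *)
Definition Aplus (n : nat) (A : mat n.+1) : mat n :=
  fun i j => A (lift ord0 i) (lift ord0 j).
Definition inS (n : nat) (A : mat n.+1) : Prop :=
  forall i, A ord0 i = 0 /\ A i ord0 = 0.
(* I_n + sqrt(-1) A *)
Definition InA (n : nat) (A : mat n.+1) : cmat n.+1 :=
  fun i j => ((if (i == j) && (i != ord0) then R1 else R0), A i j).

Definition Theta_is (n : nat) (A : mat n.+1) (th : R) : Prop :=
  (inS A /\ exists lam, is_eigs_R (Aplus A) lam /\
                        th = PI / 2 + sumR (fun i => atan (lam i)))
  \/ (~ inS A /\ exists mu, is_eigs_C (InA A) mu /\
                        th = sumR (fun k => Carg (mu k))).

Definition FFc (n : nat) (c : R) (A : mat n.+1) : Prop :=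
  symmetric A /\ exists th, Theta_is A th /\ c <= th.

Definition mint (m : nat) (F : mat m -> Prop) (A : mat m) : Prop :=
  symmetric A /\ exists eps, 0 < eps /\
    forall B, symmetric B -> (forall i j, Rabs (B i j - A i j) < eps) -> F B.
Definition dual (m : nat) (F : mat m -> Prop) (A : mat m) : Prop :=
  symmetric A /\ ~ mint F (fun i j => - A i j).

Definition near (m : nat) (x y : vec m) (d : R) : Prop :=
  forall i, Rabs (y i - x i) < d.
Definition is_open (m : nat) (X : vec m -> Prop) : Prop :=
  forall x, X x -> exists d, 0 < d /\ forall y, near x y d -> X y.
Definition is_connected (m : nat) (X : vec m -> Prop) : Prop :=
  forall U V : vec m -> Prop, is_open U -> is_open V ->
    (forall x, X x -> U x \/ V x) -> (forall x, X x -> U x -> V x -> False) ->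
    (exists x, X x /\ U x) -> (exists x, X x /\ V x) -> False.
Definition is_domain (m : nat) (X : vec m -> Prop) : Prop :=
  is_open X /\ is_connected X /\ exists x, X x.
Definition is_compact (m : nat) (K : vec m -> Prop) : Prop :=
  forall (I : Type) (U : I -> vec m -> Prop), (forall i, is_open (U i)) ->
    (forall x, K x -> exists i, U i x) ->
    exists l : list I, forall x, K x -> exists i, List.In i l /\ U i x.
Definition interior (m : nat) (K : vec m -> Prop) (x : vec m) : Prop :=
  exists d, 0 < d /\ forall y, near x y d -> K y.
Definition closure (m : nat) (K : vec m -> Prop) (x : vec m) : Prop :=
  forall d, 0 < d -> exists y, near x y d /\ K y.
Definition boundary (m : nat) (K : vec m -> Prop) (x : vec m) : Prop :=
  closure K x /\ ~ interior K x.

(* ---------- functions with values in [-oo, +oo)  (None = -oo) ---------- *)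
Definition ele (a : option R) (r : R) : Prop :=
  match a with None => True | Some s => s <= r end.
Definition elt (a : option R) (r : R) : Prop :=
  match a with None => True | Some s => s < r end.
Definition eadd (a : option R) (r : R) : option R :=
  match a with None => None | Some s => Some (s + r) end.

Definition usc (m : nat) (X : vec m -> Prop) (u : vec m -> option R) : Prop :=
  forall x, X x -> forall M, elt (u x) M ->
    exists d, 0 < d /\ forall y, X y -> near x y d -> elt (u y) M.

Definition affine (m : nat) (a : vec m -> R) : Prop :=
  exists (b : R) (w : 'I_m -> R), forall x, a x = b + sumR (fun i => w i * x i).

Definition subaffine (m : nat) (X : vec m -> Prop) (u : vec m -> option R) : Prop :=
  usc X u /\
  forall (K : vec m -> Prop) (a : vec m -> R),
    is_compact K -> (forall x, K x -> X x) -> affine a ->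
    (forall x, boundary K x -> ele (u x) (a x)) ->
    forall x, K x -> ele (u x) (a x).

Definition evec (m : nat) (x : vec m) (i : 'I_m) (s : R) : vec m :=
  fun k => if k == i then x k + s else x k.
Definition cont_on (m : nat) (X : vec m -> Prop) (f : vec m -> R) : Prop :=
  forall x, X x -> forall e, 0 < e ->
    exists d, 0 < d /\ forall y, X y -> near x y d -> Rabs (f y - f x) < e.
Definition C2_hess (m : nat) (X : vec m -> Prop) (v : vec m -> R)
    (H : vec m -> mat m) : Prop :=
  exists Dv : 'I_m -> vec m -> R,
    (forall x, X x -> forall i,
        derivable_pt_lim (fun s => v (evec x i s)) 0 (Dv i x)) /\
    (forall x, X x -> forall i j,
        derivable_pt_lim (fun s => Dv i (evec x j s)) 0 (H x i j)) /\
    (forall i j, cont_on X (fun x => H x i j)).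

Definition inF (m : nat) (F : mat m -> Prop) (X : vec m -> Prop)
    (u : vec m -> option R) : Prop :=
  usc X u /\
  forall (v : vec m -> R) (H : vec m -> mat m), C2_hess X v H ->
    (forall x, X x -> dual F (H x)) ->
    subaffine X (fun x => eadd (u x) (v x)).

Definition pt (n : nat) (t : R) (x : vec n) : vec n.+1 :=
  fun i => match unlift ord0 i with Some j => x j | None => t end.
Definition cyl (n : nat) (D : vec n -> Prop) : vec n.+1 -> Prop :=
  fun p => 0 < p ord0 < 1 /\ D (fun j => p (lift ord0 j)).

(* Main.v *)
From Stdlib Require Import Reals Lra.
From Stdlib Require Import FunctionalExtensionality ClassicalEpsilon Classical.
From HB Require Import structures.
From mathcomp Require Import all_boot all_order all_fingroup all_algebra.
From mathcomp Require Import Rstruct complex ring.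
Require Import Defs.
Set Implicit Arguments. Unset Strict Implicit. Unset Printing Implicit Defensive.

Section AlgPart.
Import Order.TTheory GRing.Theory Num.Theory.
Local Open Scope ring_scope.
Local Open Scope complex_scope.

Notation CC := (R[i]).

Definition phi (z : C) : CC := (fst z) +i* (snd z).

Lemma phiD a b : phi (Cadd a b) = phi a + phi b. Proof. by []. Qed.
Lemma phiM a b : phi (Cmul a b) = phi a * phi b.
Proof. case: a => a1 a2; case: b => b1 b2. rewrite /phi /Cmul /=. by []. Qed.
Lemma phi0 : phi C0 = 0. Proof. by []. Qed.
Lemma phi1 : phi C1 = 1. Proof. by []. Qed.
Lemma phiN a : phi (Copp a) = - phi a. Proof. by []. Qed.

Lemma detR_mx m (X : mat m) : detR X = \det (\matrix_(i, j) X i j).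
Proof.
rewrite /detR /determinant; apply: eq_bigr => s _.
congr (_ * _).
  case: (odd_perm s); rewrite /= ?expr1 ?expr0 //.

by apply: eq_bigr => i _; rewrite mxE.
Qed.

Lemma detC_phi m (M : cmat m) : phi (detC M) = \det (\matrix_(i, j) phi (M i j)).
Proof.
rewrite /detC /determinant (big_morph phi phiD phi0); apply: eq_bigr => s _.
rewrite phiM; congr (_ * _).
  by case: (odd_perm s); rewrite /= ?expr1 ?expr0 ?phiN ?phi1.
rewrite (big_morph phi phiM phi1); by apply: eq_bigr => i _; rewrite mxE.
Qed.

Lemma spec_real (n : nat) (Bc : 'M[CC]_n) :
  Bc \is symmetricmx -> Bc \is a realmx ->
  exists sp : 'I_n -> R, forall w : CC, \det (w%:M - Bc) = \prod_k (w - (sp k)%:C).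
Proof.
move=> Bs Br.
have Bh := realsym_hermsym Bs Br.
have dreal := hermitian_spectral_diag_real Bh.
have /orthomx_spectralP Beq := hermitian_normalmx Bh.
set P := spectralmx Bc in Beq. set d := spectral_diag Bc in Beq dreal.
have Pu : P \in unitmx by apply: spectral_unit.
exists (fun k => complex.Re (d 0 k)) => w.
have -> : w%:M - Bc = invmx P *m (w%:M - diag_mx d) *m P.
  rewrite {1}Beq mulmxBr mulmxBl; congr (_ - _).
  by rewrite scalar_mxC -mulmxA mulVmx // mulmx1.
rewrite (@det_mulmx CC) (@det_mulmx CC) det_inv mulrC mulrA mulrV ?unitmxE -?unitmxE // mul1r.
have -> : w%:M - diag_mx d = diag_mx (\row_k (w - d 0 k)).
  by apply/matrixP => i j; rewrite !mxE; case: (i == j); rewrite ?mulr1n ?mulr0n ?subr0.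
rewrite det_diag; apply: eq_bigr => k _; rewrite mxE.
congr (_ - _).
have /mxOverP /(_ 0 k) := dreal.
case: (d 0 k) => a b /=.
rewrite realE !lecE => /orP [] /andP [/eqP H _]; apply/eqP; rewrite eq_complex /= eqxx /=; apply/eqP.
  by move: H => /= ->.
by move: H => /= <-.
Qed.

Definition Bc n (B : mat n) : 'M[CC]_n := \matrix_(i, j) (B i j)%:C.

Lemma real_eigs n (B : mat n) : symmetric B ->
  exists lam : 'I_n -> R, is_eigs_R B lam /\
    forall w : CC, \det (w%:M - Bc B) = \prod_k (w - (lam k)%:C).
Proof.
move=> Bsym.
have [] := @spec_real n (Bc B).
- apply/is_hermitianmxP; rewrite expr0 scale1r; apply/matrixP => i j.
  by rewrite !mxE /= Bsym.
- apply/mxOverP => i j; rewrite mxE realE ler0c (lecR (B i j) 0).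
  by rewrite -realE num_real.
move=> lam Hlam; exists lam; split => // z.
apply: (@complexI R).
rewrite detR_mx -det_map_mx.
have -> : \big[Rmult/R1]_(k < n) (z - lam k)%R = \prod_(k < n) (z - lam k) by [].
rewrite rmorph_prod; under eq_bigr do rewrite rmorphB.
rewrite -Hlam; congr (\det _).
apply/matrixP => i j; rewrite !mxE /idm.
have e1 : R1 = 1 by []. have e0 : R0 = 0 by [].
case: (i == j); rewrite /= ?mulr1n ?mulr0n rmorphB rmorphM ?e1 ?e0 ?rmorph1 ?rmorph0 ?mulr1 ?mulr0 //.
Qed.

Lemma poly_eval_eq (p q : {poly CC}) : (forall x, p.[x] = q.[x]) -> p = q.
Proof.
move=> h; apply/eqP; rewrite -subr_eq0; apply/eqP.
apply: (@roots_geq_poly_eq0 _ _ [seq (k%:R : CC) | k <- iota 0 (size (p - q))]).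
- by apply/allP => x _; rewrite /root !hornerE h subrr.
- rewrite map_inj_uniq ?iota_uniq // => a b /eqP; rewrite eqr_nat => /eqP.
  by [].
- by rewrite size_map size_iota.
Qed.

Definition diagM n (a : R) (B : mat n) : mat n.+1 := fun i j =>
  match unlift ord0 i, unlift ord0 j with
  | Some i', Some j' => B i' j'
  | None, None => a
  | _, _ => 0%R end.

Lemma iden (w : CC) (b : R) : 'i * (- 'i * (w - 1) - b%:C) = w - (1 +i* b).
Proof.
have hii : 'i * 'i = -1 :> CC by rewrite -expr2 sqr_i.
have -> : (1 +i* b) = 1 + 'i * b%:C.
  by apply/eqP; rewrite eq_complex /=; apply/andP; split; apply/eqP; ring.
transitivity (- ('i * 'i) * (w - 1) - 'i * b%:C); first ring.
rewrite hii; ring.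
Qed.

Lemma iden0 (b : R) : 0 - (0 +i* b) = 'i * (0 - b%:C) :> CC.
Proof.
by apply/eqP; rewrite eq_complex /=; apply/andP; split; apply/eqP; ring.
Qed.

Local Open Scope R_scope.
Lemma Carg_i a : 0 < a -> Carg (0, a) = PI / 2.
Proof.
move=> ha; rewrite /Carg /=.
destruct (Rlt_dec 0 0) as [h|h0]; first lra.
destruct (Rlt_dec 0 0) as [h|h1]; first lra.
destruct (Rlt_dec 0 a) as [h|h] => //; lra.
Qed.
Lemma Carg_1 l : Carg (1, l) = atan l.
Proof.
rewrite /Carg /=.
destruct (Rlt_dec 0 1) as [h|h]; last lra.
by rewrite /Rdiv Rinv_1 Rmult_1_r.
Qed.
Local Close Scope R_scope.

Definition gC (x : CC) : R := Carg (complex.Re x, complex.Im x).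

Local Open Scope R_scope.
Lemma theta_diag n (a : R) (B : mat n) : 0 < a -> symmetric B ->
  forall th, Theta_is (diagM a B) th ->
  exists lam, is_eigs_R B lam /\ th = PI / 2 + sumR (fun i => atan (lam i)).
Local Close Scope R_scope.
Proof.
move=> apos Bsym th [[HS _]|[_ [mu [Hmu ->]]]].
  have := HS ord0; rewrite /diagM unlift_none => -[h _].
  move: apos; rewrite h => H; exfalso; exact: (Rlt_irrefl _ H).
have [lam [Hlam Hlc]] := real_eigs Bsym.
exists lam; split => //.
set A : 'M[CC]_n.+1 := \matrix_(i, j) phi (InA (diagM a B) i j).
have E1 : forall w : CC, \det (w%:M - A) = \prod_k (w - phi (mu k)).
  move=> w.
  have hz : phi (complex.Re w, complex.Im w) = w by case: w.
  have := Hmu (complex.Re w, complex.Im w).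
  move=> /(congr1 phi); rewrite detC_phi (big_morph phi phiM phi1).
  under eq_bigr do rewrite phiD phiN hz.
  move=> <-; congr (\det _); apply/matrixP => i j; rewrite !mxE.
  rewrite phiD phiN; congr (_ - _); case: (i == j) => //=.
have E2 : forall w : CC, \det (w%:M - A) =
    (w - (0 +i* a)) * \prod_k (w - (1 +i* lam k)).
  move=> w; rewrite (expand_det_row _ ord0) big_ord_recl /=.
  rewrite big1 ?addr0; last first.
    move=> j _; rewrite /A !mxE /InA /diagM unlift_none liftK /=.
    by rewrite mulr0n sub0r (_ : phi (R0, 0) = 0) // oppr0 mul0r.
  congr (_ * _).
    by rewrite /A !mxE /InA /diagM unlift_none /= mulr1n.
  rewrite /cofactor /= expr0 mul1r.
  have -> : row' ord0 (col' ord0 (w%:M - A)) = 'i *: ((- 'i * (w - 1))%:M - Bc B).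
    apply/matrixP => i j; rewrite /A /Bc !mxE /InA /diagM !liftK (inj_eq lift_inj) /=.
    case: (i == j); rewrite ?mulr1n ?mulr0n.
      by rewrite iden.
    by rewrite iden0.
  rewrite detZ Hlc.
  have -> : 'i ^+ n = 'i ^+ #|'I_n| :> CC by rewrite card_ord.
  rewrite -prodrMl; apply: eq_bigr => k _.
  by rewrite iden.
set s1 := [seq phi (mu k) | k <- index_enum 'I_n.+1].
set s2 := (0 +i* a) :: [seq (1 +i* lam k) | k <- index_enum 'I_n].
have E3 : \prod_(x <- s1) ('X - x%:P) = \prod_(x <- s2) ('X - x%:P).
  apply: poly_eval_eq => x; rewrite !horner_prod.
  under eq_bigr do rewrite hornerXsubC.
  under [RHS]eq_bigr do rewrite hornerXsubC.
  rewrite big_cons !big_map -E1 E2 //.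
have P := prod_XsubC_eq E3.
have sR : forall m (f : 'I_m -> R), sumR f = \sum_(i < m) f i by [].
rewrite !sR.
have -> : \sum_(k < n.+1) Carg (mu k) = \sum_(x <- s1) gC x.
  by rewrite big_map; apply: eq_bigr => k _; rewrite /gC; case: (mu k).
rewrite (perm_big _ P) big_cons big_map /gC /= Carg_i //.
congr (_ + _); apply: eq_bigr => k _; exact: Carg_1.
Qed.

End AlgPart.

From Stdlib Require Import Ring Field.
Open Scope R_scope.

Lemma mychoice {A B : Type} (P : A -> B -> Prop) :
  (forall a, exists b, P a b) -> exists f : A -> B, forall a, P a (f a).
Proof.
move=> H; exists (fun a => proj1_sig (constructive_indefinite_description _ (H a))).
move=> a; exact: (proj2_sig (constructive_indefinite_description _ (H a))).
Qed.

Lemma list_min {A : Type} (l : list A) (f : A -> R) :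
  (forall a, List.In a l -> 0 < f a) ->
  exists d, 0 < d /\ forall a, List.In a l -> d <= f a.
Proof.
elim: l => [|x l IH] H.
  by exists 1; split; [lra|].
have [d [d0 Hd]] : exists d, 0 < d /\ forall a, List.In a l -> d <= f a.
  by apply: IH => a Ha; apply: H; right.
have fx := H x (or_introl erefl).
exists (Rmin d (f x)); split; first by apply: Rmin_pos.
move=> a [<-|Ha]; first by apply: Rmin_r.
by apply: Rle_trans (Rmin_l _ _) (Hd a Ha).
Qed.

Lemma list_max {A : Type} (l : list A) (f : A -> R) :
  exists M, forall a, List.In a l -> f a <= M.
Proof.
elim: l => [|x l [M HM]]; first by exists 0.
exists (Rmax M (f x)) => a [<-|Ha]; first by apply: Rmax_r.
by apply: Rle_trans (HM a Ha) (Rmax_l _ _).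
Qed.

Lemma in_In (T : eqType) (x : T) (s : seq T) : x \in s -> List.In x s.
Proof.
elim: s => //= y s IH; rewrite inE => /orP [/eqP ->|h]; [by left | right; exact: IH].
Qed.

Lemma fin_min m (f : 'I_m -> R) : (forall i, 0 < f i) ->
  exists d, 0 < d /\ forall i, d <= f i.
Proof.
move=> H; have [d [d0 Hd]] := list_min (l := enum 'I_m) (f := f) (fun a _ => H a).
exists d; split => // i; apply: Hd.
by apply: in_In; rewrite mem_enum.
Qed.

Lemma near_open m (x : vec m) r : is_open (fun y => near x y r).
Proof.
move=> y Hy.
have [d [d0 Hd]] := @fin_min m (fun i => r - Rabs (y i - x i))
   (fun i => ltac:(have := Hy i; lra)).
exists d; split => // z Hz i.
have := Hz i; have := Hd i; have := Rabs_triang (z i - y i) (y i - x i).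
rewrite (_ : z i - y i + (y i - x i) = z i - x i); last lra.
lra.
Qed.

Lemma near_refl m (x : vec m) r : 0 < r -> near x x r.
Proof. move=> r0 i; rewrite Rminus_diag_eq // Rabs_R0 //. Qed.

Lemma near_sym m (x y : vec m) r : near x y r -> near y x r.
Proof. move=> H i; rewrite Rabs_minus_sym; exact: H. Qed.

Lemma near_trans m (x y z : vec m) r s : near x y r -> near y z s -> near x z (r + s).
Proof.
move=> H1 H2 i; have := H1 i; have := H2 i; have := Rabs_triang (z i - y i) (y i - x i).
rewrite (_ : z i - y i + (y i - x i) = z i - x i); last lra.
lra.
Qed.

Lemma near_mono m (x y : vec m) r s : r <= s -> near x y r -> near x y s.
Proof. move=> h H i; have := H i; lra. Qed.

Lemma compact_balls m (K : vec m -> Prop) (r : vec m -> R) :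
  is_compact K -> (forall x, K x -> 0 < r x) ->
  exists xs : list (vec m), forall y, K y ->
    exists x, List.In x xs /\ K x /\ near x y (r x).
Proof.
move=> HK Hr.
have := HK (vec m) (fun x y => K x /\ near x y (r x)).
case.
- move=> x y [Kx Hy]; have [d [d0 Hd]] := near_open Hy.
  exists d; split => // z Hz; split => //; exact: Hd.
- move=> y Ky; exists y; split => //; exact: near_refl (Hr y Ky).
move=> xs Hxs; exists xs => y Ky.
have [x [Hx [Kx Hn]]] := Hxs y Ky.
by exists x.
Qed.



Lemma vec_neq m (x y : vec m) : y <> x -> exists i, y i <> x i.
Proof.
move=> H; apply: NNPP => H2; apply: H; apply: functional_extensionality => i.
by apply: NNPP => H3; apply: H2; exists i.
Qed.

Lemma compact_closed m (K : vec m -> Prop) x : is_compact K -> closure K x -> K x.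
Proof.
move=> HK Hc; apply: NNPP => Kx.
have := HK nat (fun k y => exists i, / (INR k + 1) < Rabs (y i - x i)).
case.
- move=> k y [i Hi].
  exists (Rabs (y i - x i) - / (INR k + 1)); split; first lra.
  move=> z Hz; exists i; have := Hz i.
  have := Rabs_triang (z i - y i) (y i - x i).
  have := Rabs_triang (y i - z i) (z i - x i).
  rewrite (_ : z i - y i + (y i - x i) = z i - x i); last lra.
  rewrite (_ : y i - z i + (z i - x i) = y i - x i); last lra.
  rewrite (Rabs_minus_sym (y i) (z i)); lra.
- move=> y Ky.
  have [i Hi] : exists i, y i <> x i by apply: vec_neq => e; apply: Kx; rewrite -e.
  have r0 : 0 < Rabs (y i - x i) by apply: Rabs_pos_lt; lra.
  have [k Hk] := INR_archimed (Rabs (y i - x i)) 1 r0.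
  exists k, i.
  have k0 : 0 <= INR k by apply: pos_INR.
  apply: (Rmult_lt_reg_l (INR k + 1)); first lra.
  rewrite Rinv_r; last lra.
  nra.
move=> ks Hks.
have [d [d0 Hd]] := list_min (l := ks) (f := fun k => / (INR k + 1))
  (fun k _ => ltac:(apply: Rinv_0_lt_compat; have := pos_INR k; lra)).
have [y [Hy Ky]] := Hc d d0.
have [k [Hk [i Hi]]] := Hks y Ky.
move: (Hd k Hk) (Hy i) Hi => /= h1 h2 h3; lra.
Qed.

Lemma HB1 (al be : R) (r : R -> R) : (forall t, al <= t <= be -> 0 < r t) ->
  exists l : list R, (forall t, List.In t l -> al <= t <= be) /\ forall s, al <= s <= be ->
     exists t, List.In t l /\ al <= t <= be /\ Rabs (s - t) < r t.
Proof.
move=> Hr.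
have Hcond : forall t, (exists s, (al <= t <= be /\ Rabs (s - t) < r t)) -> al <= t <= be.
  by move=> t [s [h _]].
pose fam := mkfamily (fun t => al <= t <= be) (fun t s => al <= t <= be /\ Rabs (s - t) < r t) Hcond.
have := compact_P3 al be fam.
case.
- split.
  + move=> s Hs; exists s; split => //=; rewrite Rminus_diag_eq // Rabs_R0; exact: Hr.
  + move=> t s /= [Ht Hs].
    have r0 : 0 < r t - Rabs (s - t) by lra.
    exists (mkposreal _ r0) => z /= Hz; split => //.
    rewrite /disc /= in Hz.
    have := Rabs_triang (z - s) (s - t).
    rewrite (_ : z - s + (s - t) = z - t); last lra.
    lra.
move=> Df [Hcov [l Hl]].
exists l; split.
  by move=> t /Hl [].
move=> s Hs.
have [t [[Ht Hst] Dt]] := Hcov s Hs.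
exists t; split; last by split.
by apply/Hl; split.
Qed.

Definition proj n (p : vec n.+1) : vec n := fun j => p (lift ord0 j).

Lemma proj_pt n t (x : vec n) : proj (pt t x) = x.
Proof. by apply: functional_extensionality => j; rewrite /proj /pt liftK. Qed.

Lemma pt_0 n t (x : vec n) : pt t x ord0 = t.
Proof. by rewrite /pt unlift_none. Qed.

Lemma pt_proj n (p : vec n.+1) : pt (p ord0) (proj p) = p.
Proof.
apply: functional_extensionality => k; rewrite /pt.
by case: unliftP => [j|] ->.
Qed.

Lemma near_pt n t s (x y : vec n) r :
  Rabs (s - t) < r -> near x y r -> near (pt t x) (pt s y) r.
Proof.
move=> h1 h2 k; rewrite /pt; case: unliftP => [j|] _ //; exact: h2.
Qed.

Lemma near_proj n (p q : vec n.+1) r : near p q r -> near (proj p) (proj q) r.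
Proof. by move=> h j; apply: h. Qed.

Lemma compact_prod n al be (K : vec n -> Prop) : is_compact K ->
  is_compact (fun p : vec n.+1 => al <= p ord0 <= be /\ K (proj p)).
Proof.
move=> HK I U Uo Ucov.
have step1 : forall x, exists rl : R * list I, K x -> 0 < rl.1 /\
   forall y, near x y rl.1 -> forall t, al <= t <= be ->
     exists i, List.In i rl.2 /\ U i (pt t y).
  move=> x; case: (classic (K x)) => Kx; last by exists (1, nil).
  have h1 : forall t, exists ir : option (I * R), al <= t <= be ->
      match ir with Some (i, r) => 0 < r /\ forall q, near (pt t x) q r -> U i q
      | None => False end.
    move=> t; case: (classic (al <= t <= be)) => Ht; last by exists None.
    have [i Hi] := Ucov (pt t x) (conj (eq_ind_r (fun z => al <= z <= be) Ht (pt_0 t x))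
                               (eq_ind_r K Kx (proj_pt t x))).
    have [r [r0 Hr]] := Uo i _ Hi.
    by exists (Some (i, r)).
  have [g Hg] := mychoice h1.
  pose rr t := match g t with Some (_, r) => r | None => 1 end.
  pose gi t := match g t with Some (i, _) => i :: nil | None => nil end.
  have Hrr : forall t, al <= t <= be -> 0 < rr t.
    move=> t Ht; have := Hg t Ht; rewrite /rr; case: (g t) => [[i r]|] //.
    by case.
  have [ts [Htsi Hts]] := HB1 Hrr.
  have [rho [rho0 Hrho]] := list_min (l := ts) (f := rr)
     (fun t Ht => Hrr t (Htsi t Ht)).
  exists (rho, List.flat_map gi ts) => _; split => //= y Hy t Ht.
  have [t' [Ht' [Ht'i Htt']]] := Hts t Ht.
  have := Hg t' Ht'i; have := Hrho t' Ht'.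
  rewrite /rr /gi in Htt' *.
  case E: (g t') Htt' => [[i r]|] //= Htt' rle [r0 Hr].
  exists i; split.
    by apply/List.in_flat_map; exists t'; rewrite E; split => //; left.
  apply: Hr; apply: near_pt => //.
  exact: near_mono rle Hy.
have [F HF] := mychoice step1.
have [xs Hxs] := compact_balls (r := fun x => (F x).1) HK (fun x Kx => proj1 (HF x Kx)).
exists (List.flat_map (fun x => (F x).2) xs) => p [Hp0 Kp].
have [x [Hx [Kx Hn]]] := Hxs _ Kp.
have [_ H2] := HF x Kx.
have [i [Hi HU]] := H2 _ Hn (p ord0) Hp0.
exists i; split; last by rewrite pt_proj in HU.
by apply/List.in_flat_map; exists x.
Qed.

Lemma elt_ele (a : option R) r M : elt a r -> r <= M -> ele a M.
Proof. by case: a => //= s; lra. Qed.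

Lemma usc_bound m (X K : vec m -> Prop) (f : vec m -> option R) :
  usc X f -> is_compact K -> (forall x, K x -> X x) ->
  exists M, forall x, K x -> ele (f x) M.
Proof.
move=> Hu HK KX.
have step : forall x, exists dM : R * R, K x -> 0 < dM.1 /\
    forall y, X y -> near x y dM.1 -> elt (f y) dM.2.
  move=> x; case: (classic (K x)) => Kx; last by exists (1, 0).
  pose M0 := match f x with Some s => s + 1 | None => 0 end.
  have h : elt (f x) M0 by rewrite /M0; case: (f x) => //= s; lra.
  have [d [d0 Hd]] := Hu x (KX x Kx) M0 h.
  by exists (d, M0).
have [G HG] := mychoice step.
have [xs Hxs] := compact_balls (r := fun x => (G x).1) HK (fun x Kx => proj1 (HG x Kx)).
have [M HM] := list_max xs (fun x => (G x).2).
exists M => y Ky.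
have [x [Hx [Kx Hn]]] := Hxs _ Ky.
have [_ H2] := HG x Kx.
exact: elt_ele (H2 y (KX y Ky) Hn) (HM x Hx).
Qed.

Lemma sumR_sub m (f g : 'I_m -> R) : sumR f - sumR g = sumR (fun i => f i - g i).
Proof.
elim: m f g => [|m IH] f g; rewrite /sumR; first by rewrite !big_ord0; lra.
rewrite !big_ord_recr /=.
have := IH (fun i => f (widen_ord (leqnSn m) i)) (fun i => g (widen_ord (leqnSn m) i)).
rewrite /sumR => <- /=; lra.
Qed.

Lemma sumR_abs m (f : 'I_m -> R) : Rabs (sumR f) <= sumR (fun i => Rabs (f i)).
Proof.
elim: m f => [|m IH] f; rewrite /sumR; first by rewrite !big_ord0 Rabs_R0; lra.
rewrite !big_ord_recr /=.
have := IH (fun i => f (widen_ord (leqnSn m) i)); rewrite /sumR /= => h.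
have := Rabs_triang (\big[Rplus/R0]_(i < m) f (widen_ord (leqnSn m) i)) (f ord_max).
move=> h2; apply: Rle_trans h2 _; apply: Rplus_le_compat_r; exact: h.
Qed.

Lemma sumR_le m (f g : 'I_m -> R) : (forall i, f i <= g i) -> sumR f <= sumR g.
Proof.
elim: m f g => [|m IH] f g H; rewrite /sumR; first by rewrite !big_ord0; lra.
rewrite !big_ord_recr /=.
have := IH (fun i => f (widen_ord (leqnSn m) i)) (fun i => g (widen_ord (leqnSn m) i)) (fun i => H _).
rewrite /sumR /= => h; have := H ord_max; lra.
Qed.

Lemma sumR_scal m (f : 'I_m -> R) c : sumR (fun i => f i * c) = sumR f * c.
Proof.
elim: m f => [|m IH] f; rewrite /sumR; first by rewrite !big_ord0; lra.
rewrite !big_ord_recr /=.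
have := IH (fun i => f (widen_ord (leqnSn m) i)); rewrite /sumR /= => ->; ring.
Qed.

Lemma sumR_pos m (f : 'I_m -> R) : (forall i, 0 <= f i) -> 0 <= sumR f.
Proof.
move=> H; have e : sumR (fun _ : 'I_m => 0) = 0 by rewrite /sumR big1.
rewrite -e; exact: sumR_le.
Qed.

Lemma affine_cont m (a : vec m -> R) : affine a -> forall x e, 0 < e ->
  exists d, 0 < d /\ forall y, near x y d -> Rabs (a y - a x) < e.
Proof.
move=> [b [w Hw]] x e e0.
set S := sumR (fun i => Rabs (w i)).
have S0 : 0 <= S by apply: sumR_pos => i; apply: Rabs_pos.
exists (e / (S + 1)); split; first by apply: Rdiv_lt_0_compat; lra.
move=> y Hy; rewrite !Hw.
rewrite (_ : b + sumR (fun i => w i * y i) - (b + sumR (fun i => w i * x i))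
  = sumR (fun i => w i * y i) - sumR (fun i => w i * x i)); last lra.
rewrite sumR_sub.
apply: Rle_lt_trans (sumR_abs _) _.
apply: (Rle_lt_trans _ (S * (e / (S + 1)))).
  rewrite /S -sumR_scal; apply: sumR_le => i.
  rewrite (_ : w i * y i - w i * x i = w i * (y i - x i)); last ring.
  rewrite Rabs_mult; apply: Rmult_le_compat_l; first exact: Rabs_pos.
  by move: (Hy i); rewrite /S; lra.
rewrite /Rdiv -Rmult_assoc.
apply: (Rmult_lt_reg_r (S + 1)); first lra.
rewrite Rmult_assoc Rinv_l; last lra.
nra.
Qed.

Lemma diagM_00 n a (B : mat n) : diagM a B ord0 ord0 = a.
Proof. by rewrite /diagM unlift_none. Qed.
Lemma diagM_0l n a (B : mat n) j : diagM a B ord0 (lift ord0 j) = 0.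
Proof. by rewrite /diagM unlift_none liftK. Qed.
Lemma diagM_l0 n a (B : mat n) j : diagM a B (lift ord0 j) ord0 = 0.
Proof. by rewrite /diagM unlift_none liftK. Qed.
Lemma diagM_ll n a (B : mat n) i j : diagM a B (lift ord0 i) (lift ord0 j) = B i j.
Proof. by rewrite /diagM !liftK. Qed.

Lemma diagM_sym n a (B : mat n) : symmetric B -> symmetric (diagM a B).
Proof.
move=> Bs i j.
case: (unliftP ord0 i) => [i'|] ->; case: (unliftP ord0 j) => [j'|] ->.
- by rewrite !diagM_ll Bs.
- by rewrite diagM_l0 diagM_0l.
- by rewrite diagM_l0 diagM_0l.
- by [].
Qed.

Lemma dual_diag n c (N : R) (H : mat n) : 0 < N ->
  dual (Fc (c - PI / 2)) H -> dual (FFc c) (diagM (- N) H).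
Proof.
move=> N0 [Hs Hnm]; split; first exact: diagM_sym.
move=> [_ [eps [eps0 Heps]]]; apply: Hnm; split.
  by move=> i j; rewrite Hs.
exists eps; split => // B Bs HB.
have HF := Heps (diagM N B) (diagM_sym N Bs).
case: HF.
  move=> i j.
  case: (unliftP ord0 i) => [i'|] ->; case: (unliftP ord0 j) => [j'|] ->.
  - rewrite !diagM_ll; exact: HB.
  - rewrite !diagM_l0 (_ : 0 - - 0 = 0); last lra.
    by rewrite Rabs_R0.
  - rewrite !diagM_0l (_ : 0 - - 0 = 0); last lra.
    by rewrite Rabs_R0.
  - rewrite !diagM_00 (_ : N - - - N = 0); last lra.
    by rewrite Rabs_R0.
move=> _ [th [Hth cth]].
have [lam [Hl Hth2]] := theta_diag N0 Bs Hth.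
split => //; exists lam; split => //; lra.
Qed.

Lemma dquad A B C : derivable_pt_lim (fun s => A + B * s + C * (s * s)) 0 B.
Proof.
move=> e e0.
have c1 : 0 < Rabs C + 1 by have := Rabs_pos C; lra.
have d0 : 0 < e / (Rabs C + 1) by apply: Rdiv_lt_0_compat.
exists (mkposreal _ d0) => h h0 hd /=.
rewrite (_ : (A + B * (0 + h) + C * ((0 + h) * (0 + h)) - (A + B * 0 + C * (0 * 0))) / h - B
   = C * h); last by field.
rewrite Rabs_mult.
apply: (Rle_lt_trans _ (Rabs C * (e / (Rabs C + 1)))).
  apply: Rmult_le_compat_l; [exact: Rabs_pos | simpl in hd; lra].
have -> : Rabs C * (e / (Rabs C + 1)) = e - e / (Rabs C + 1) by field; lra.
lra.
Qed.

Lemma dshift f K l x : derivable_pt_lim f x l -> derivable_pt_lim (fun s => f s + K) x l.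
Proof.
move=> H e e0; have [d Hd] := H e e0; exists d => h h0 hd.
by rewrite (_ : f (x + h) + K - (f x + K) = f (x + h) - f x); [exact: Hd | ring].
Qed.

Lemma dext f g x l : (forall s, f s = g s) -> derivable_pt_lim f x l -> derivable_pt_lim g x l.
Proof.
by move=> H; rewrite (_ : g = f) //; apply: functional_extensionality => s; rewrite H.
Qed.

Lemma evec_00 n (p : vec n.+1) s : evec p ord0 s ord0 = p ord0 + s.
Proof. by rewrite /evec eqxx. Qed.
Lemma proj_evec0 n (p : vec n.+1) s : proj (evec p ord0 s) = proj p.
Proof.
apply: functional_extensionality => j; rewrite /proj /evec.
by rewrite eq_sym (negbTE (neq_lift _ _)).
Qed.
Lemma evec_l0 n (p : vec n.+1) i s : evec p (lift ord0 i) s ord0 = p ord0.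
Proof. by rewrite /evec (negbTE (neq_lift _ _)). Qed.
Lemma proj_evecl n (p : vec n.+1) i s : proj (evec p (lift ord0 i) s) = evec (proj p) i s.
Proof.
apply: functional_extensionality => j; rewrite /proj /evec.
by rewrite (inj_eq lift_inj).
Qed.

Definition wN n (v : vec n -> R) t0 N (p : vec n.+1) : R :=
  v (proj p) - N * ((p ord0 - t0) * (p ord0 - t0)).
Definition HN n (H : vec n -> mat n) N (p : vec n.+1) : mat n.+1 :=
  diagM (- (2 * N)) (H (proj p)).

Lemma C2_w n (D : vec n -> Prop) v H t0 N :
  C2_hess D v H -> C2_hess (cyl D) (wN v t0 N) (HN H N).
Proof.
move=> [Dv [Hv1 [Hv2 Hc]]].
exists (fun k p => match unlift ord0 k with Some i => Dv i (proj p)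
                   | None => - (2 * N) * (p ord0 - t0) end).
split; [|split].
- move=> p [_ Dp] k; case: (unliftP ord0 k) => [i|] ->.
  + idtac.
    apply: (@dext (fun s => v (evec (proj p) i s) + - (N * ((p ord0 - t0) * (p ord0 - t0))))).
      by move=> s; rewrite /wN proj_evecl evec_l0.
    apply: dshift; exact: Hv1.
  + idtac.
    apply: (@dext (fun s => (v (proj p) - N * ((p ord0 - t0) * (p ord0 - t0)))
                  + (- (2 * N) * (p ord0 - t0)) * s + (- N) * (s * s))).
      by move=> s; rewrite /wN proj_evec0 evec_00; ring.
    exact: dquad.
- move=> p [_ Dp] k l; rewrite /HN.
  case: (unliftP ord0 k) => [i|] ->; case: (unliftP ord0 l) => [j|] ->.
  + rewrite /= ?liftK diagM_ll.
    apply: (@dext (fun s => Dv i (evec (proj p) j s))).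
      by move=> s; rewrite proj_evecl.
    exact: Hv2.
  + rewrite /= ?liftK diagM_l0.
    apply: (@dext (fun s => Dv i (proj p) + 0 * s + 0 * (s * s))).
      by move=> s; rewrite proj_evec0; ring.
    exact: dquad.
  + rewrite /= ?unlift_none diagM_0l.
    apply: (@dext (fun s => - (2 * N) * (p ord0 - t0) + 0 * s + 0 * (s * s))).
      by move=> s; rewrite evec_l0; ring.
    exact: dquad.
  + rewrite /= ?unlift_none diagM_00.
    apply: (@dext (fun s => - (2 * N) * (p ord0 - t0) + (- (2 * N)) * s + 0 * (s * s))).
      by move=> s; rewrite evec_00; ring.
    exact: dquad.
- move=> k l p [_ Dp] e e0; rewrite /HN.
  case: (unliftP ord0 k) => [i|] ->; case: (unliftP ord0 l) => [j|] ->.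
  + have [d [d0 Hd]] := Hc i j (proj p) Dp e e0.
    exists d; split => // q [_ Dq] Hq; rewrite !diagM_ll.
    exact: Hd Dq (near_proj Hq).
  all: exists 1; split; [lra|] => q _ _;
       rewrite ?diagM_l0 ?diagM_0l ?diagM_00 Rminus_diag_eq // Rabs_R0 //.
Qed.

Lemma wN_pt n (v : vec n -> R) t0 N x : wN v t0 N (pt t0 x) = v x.
Proof. rewrite /wN proj_pt pt_0; ring. Qed.

Lemma wN_face n (v : vec n -> R) t0 N p :
  wN v t0 N p = wN v t0 1 p - (N - 1) * ((p ord0 - t0) * (p ord0 - t0)).
Proof. rewrite /wN; ring. Qed.

Lemma elt_mono a r r' : elt a r -> r <= r' -> elt a r'.
Proof. by case: a => //= s; lra. Qed.

Lemma cyl_pt n (D : vec n -> Prop) t x : 0 < t < 1 -> D x -> cyl D (pt t x).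
Proof. by move=> Ht Dx; rewrite /cyl pt_0; split => //; rewrite -/(proj (pt t x)) proj_pt. Qed.

Lemma affine_lift n (a : vec n -> R) e : affine a -> affine (fun p : vec n.+1 => a (proj p) + e).
Proof.
move=> [b [w Hw]].
exists (b + e), (fun k => match unlift ord0 k with Some i => w i | None => 0 end) => p.
rewrite Hw /sumR big_ord_recl /= unlift_none.
under [X in _ = _ + (_ + X)]eq_bigr do rewrite liftK.
rewrite /proj; lra.
Qed.

Lemma interior_prod n (K : vec n -> Prop) t0 de (p : vec n.+1) :
  Rabs (p ord0 - t0) < de -> interior K (proj p) ->
  interior (fun q : vec n.+1 => t0 - de <= q ord0 <= t0 + de /\ K (proj q)) p.
Proof.
move=> Hp [d [d0 Hd]].
exists (Rmin d (de - Rabs (p ord0 - t0))); split.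
  by apply: Rmin_pos; lra.
move=> q Hq; split.
  have := Hq ord0; have := Rmin_r d (de - Rabs (p ord0 - t0)).
  have := Rabs_triang (q ord0 - p ord0) (p ord0 - t0).
  rewrite (_ : q ord0 - p ord0 + (p ord0 - t0) = q ord0 - t0); last ring.
  move=> h1 h2 h3; have h4 : Rabs (q ord0 - t0) < de by lra.
  split.
  - have := Rabs_Ropp (q ord0 - t0); have := Rle_abs (- (q ord0 - t0)); lra.
  - have := Rle_abs (q ord0 - t0); lra.
apply: Hd => j; have := Hq (lift ord0 j); have := Rmin_l d (de - Rabs (p ord0 - t0)).
rewrite /proj; lra.
Qed.

Lemma list_filter_prop {A : Type} (P : A -> Prop) (l : list A) :
  exists l', (forall x, List.In x l' -> P x) /\ (forall x, List.In x l -> P x -> List.In x l').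
Proof.
elim: l => [|y l [l' [H1 H2]]]; first by exists nil.
case: (classic (P y)) => Py.
- exists (y :: l'); split.
    by move=> x [<-|Hx] //; apply: H1.
  by move=> x [<-|Hx] Px; [left | right; apply: H2].
- exists l'; split => // x [<-|Hx] Px //; exact: H2.
Qed.

Lemma compact_balls' m (K : vec m -> Prop) (r : vec m -> R) :
  is_compact K -> (forall x, K x -> 0 < r x) ->
  exists xs : list (vec m), (forall x, List.In x xs -> K x) /\ forall y, K y ->
    exists x, List.In x xs /\ K x /\ near x y (r x).
Proof.
move=> HK Hr; have [xs Hxs] := compact_balls HK Hr.
have [xs' [H1 H2]] := list_filter_prop K xs.
exists xs'; split => // y Ky; have [x [Hx [Kx Hn]]] := Hxs y Ky.
by exists x; split => //; apply: H2.
Qed.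

Lemma stepA n (D K : vec n -> Prop) (a : vec n -> R) (U1 : vec n.+1 -> option R) t0 e :
  0 < e -> is_compact K -> (forall x, K x -> D x) -> affine a -> usc (cyl D) U1 ->
  0 < t0 < 1 ->
  (forall x, boundary K x -> ele (U1 (pt t0 x)) (a x)) ->
  exists du, 0 < du /\ forall y t, boundary K y -> Rabs (t - t0) < du -> 0 < t < 1 ->
    elt (U1 (pt t y)) (a y + e).
Proof.
move=> e0 HK KD Haff Husc Ht0 Ha.
have step : forall x, exists r, K x -> 0 < r /\
   ((forall q, cyl D q -> near (pt t0 x) q r -> elt (U1 q) (a x + e / 2)) /\
    (forall y, near x y r -> Rabs (a y - a x) < e / 2)
    \/ (forall y, near x y (r + r) -> K y)).
  move=> x; case: (classic (K x)) => Kx; last by exists 1.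
  case: (classic (boundary K x)) => Hb.
  - have h : elt (U1 (pt t0 x)) (a x + e / 2).
      by move: (Ha x Hb); case: (U1 (pt t0 x)) => //= s; lra.
    have [d1 [d10 Hd1]] := Husc (pt t0 x) (cyl_pt Ht0 (KD x Kx)) _ h.
    have [d2 [d20 Hd2]] := affine_cont Haff x (ltac:(lra) : 0 < e / 2).
    exists (Rmin d1 d2) => _; split; first by apply: Rmin_pos.
    left; split.
      move=> q Cq Hq; apply: Hd1 => //; apply: near_mono _ Hq; apply: Rmin_l.
    move=> y Hy; apply: Hd2; apply: near_mono _ Hy; apply: Rmin_r.
  - have [d [d0 Hd]] : interior K x.
      apply: NNPP => Hi; apply: Hb; split => // d d0.
      by exists x; split => //; apply: near_refl.
    exists (d / 2) => _; split; first lra.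
    right => y Hy; apply: Hd; apply: near_mono _ Hy; lra.
have [rr Hrr] := mychoice step.
have [xs [Hxs1 Hxs]] := compact_balls' (r := rr) HK (fun x Kx => proj1 (Hrr x Kx)).
have [du [du0 Hdu]] := list_min (l := xs) (f := rr) (fun x Hx => proj1 (Hrr x (Hxs1 x Hx))).
exists du; split => // y t Hby Ht Ht1.
have Ky : K y by apply: (compact_closed HK); case: Hby.
have [x [Hx [Kx Hn]]] := Hxs y Ky.
have [r0 [[H1 H2]|H3]] := Hrr x Kx.
- apply: (@elt_mono _ (a x + e / 2)).
    apply: H1; first exact: cyl_pt Ht1 (KD y Ky).
    apply: near_pt => //; have := Hdu x Hx; lra.
  have := H2 y Hn; have := Rle_abs (a y - a x); have := Rabs_Ropp (a y - a x);
  have := Rle_abs (- (a y - a x)); lra.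
- exfalso; case: Hby => _; apply.
  exists (rr x); split => // z Hz; apply: H3; exact: near_trans Hn Hz.
Qed.

Theorem lemma9p1 (n : nat) (D : vec n -> Prop) (c : R) (u : vec n.+1 -> option R) :
  is_domain D ->
  Rabs c < INR n.+1 * PI / 2 ->
  inF (FFc c) (cyl D) u ->
  forall t0 : R, 0 < t0 < 1 ->
    inF (Fc (c - PI / 2)) D (fun x => u (pt t0 x)).
Proof.
move=> _ _ [Husc Hsub] t0 Ht0.
have n0 : forall d, 0 < d -> Rabs (t0 - t0) < d.
  by move=> d d0; rewrite Rminus_diag_eq // Rabs_R0.
split.
  move=> x Dx M HM.
  have [d [d0 Hd]] := Husc _ (cyl_pt Ht0 Dx) M HM.
  exists d; split => // y Dy Hy; apply: Hd; first exact: cyl_pt Ht0 Dy.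
  exact: near_pt (n0 d d0) Hy.
move=> v H HC2 Hdual.
have HsubN : forall N, 0 < N -> subaffine (cyl D) (fun p => eadd (u p) (wN v t0 N p)).
  move=> N N0; apply: (Hsub (wN v t0 N) (HN H N)); first exact: C2_w.
  move=> p [_ Dp]; rewrite /HN; apply: dual_diag; first lra.
  exact: Hdual _ Dp.
have [Husc1 _] := HsubN 1 Rlt_0_1.
split.
  move=> x Dx M HM; rewrite -(wN_pt v t0 1 x) in HM.
  have [d [d0 Hd]] := Husc1 _ (cyl_pt Ht0 Dx) M HM.
  exists d; split => // y Dy Hy; rewrite -(wN_pt v t0 1 y); apply: Hd.
    exact: cyl_pt Ht0 Dy.
  exact: near_pt (n0 d d0) Hy.
move=> K a HK KD Haff Hb x Kx.
suff Heps : forall e, 0 < e -> ele (eadd (u (pt t0 x)) (v x)) (a x + e).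
  move: Heps; case: (u (pt t0 x)) => //= s Hs.
  apply: Rnot_lt_le => h.
  have := Hs ((s + v x - a x) / 2) ltac:(lra); lra.
move=> e e0.
have Hb1 : forall y, boundary K y -> ele (eadd (u (pt t0 y)) (wN v t0 1 (pt t0 y))) (a y).
  by move=> y hy; rewrite wN_pt; exact: Hb.
have [du [du0 Hdu]] := stepA (U1 := fun p => eadd (u p) (wN v t0 1 p)) e0 HK KD Haff Husc1 Ht0 Hb1.
set de := Rmin (du / 2) (Rmin (t0 / 2) ((1 - t0) / 2)).
have hde1 : de <= du / 2 by apply: Rmin_l.
have hde2 : de <= t0 / 2 by apply: Rle_trans (Rmin_r _ _) (Rmin_l _ _).
have hde3 : de <= (1 - t0) / 2 by apply: Rle_trans (Rmin_r _ _) (Rmin_r _ _).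
have de0 : 0 < de by apply: Rmin_pos; [lra | apply: Rmin_pos; lra].
set K' := fun q : vec n.+1 => t0 - de <= q ord0 <= t0 + de /\ K (proj q).
have HK' : is_compact K' by apply: compact_prod.
have K'D : forall q, K' q -> cyl D q.
  by move=> q [Hq Kq]; split; [lra | exact: KD].
have [M HM] := usc_bound Husc1 HK' K'D.
have [Ma HMa] : exists Ma, forall y, K y -> - a y <= Ma.
  have uscA : usc D (fun y => Some (- a y)).
    move=> y _ M' /= hM'.
    have [d [d0 Hd]] := affine_cont Haff y (ltac:(lra) : 0 < M' + a y).
    exists d; split => // z _ Hz /=; have := Hd z Hz.
    have := Rle_abs (a z - a y); have := Rabs_Ropp (a z - a y);
    have := Rle_abs (- (a z - a y)); lra.
  have [Ma HMa] := usc_bound uscA HK KD.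
  by exists Ma => y Ky; exact: HMa y Ky.
set N := 1 + (Rabs M + Rabs Ma + 1) / (de * de).
have dd0 : 0 < de * de by apply: Rmult_lt_0_compat.
have N1 : 0 <= N - 1.
  rewrite /N; have := Rabs_pos M; have := Rabs_pos Ma => h1 h2.
  have : 0 <= (Rabs M + Rabs Ma + 1) / (de * de).
    by apply: Rmult_le_pos; [lra | apply: Rlt_le; apply: Rinv_0_lt_compat; lra].
  lra.
have N0 : 0 < N by lra.
have [_ HsaN] := HsubN N N0.
have Hfin := HsaN K' (fun p => a (proj p) + e) HK' K'D (affine_lift e Haff).
have Kx' : K' (pt t0 x) by rewrite /K' pt_0 proj_pt; split => //; lra.
suff Hbd : forall p, boundary K' p -> ele (eadd (u p) (wN v t0 N p)) (a (proj p) + e).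
  by have := Hfin Hbd (pt t0 x) Kx'; rewrite /= wN_pt proj_pt.
move=> p [Hcl Hni].
have [Hp0 Kp] : K' p by apply: (compact_closed HK').
have Cp := K'D p (conj Hp0 Kp).
have sq0 : 0 <= (p ord0 - t0) * (p ord0 - t0) by apply: Rle_0_sqr.
rewrite wN_face.
case: (Rlt_dec (Rabs (p ord0 - t0)) de) => Hlt.
- have HbK : boundary K (proj p).
    split.
      by move=> d d0; exists (proj p); split => //; apply: near_refl.
    by move=> Hi; apply: Hni; exact: interior_prod.
  have := Hdu (proj p) (p ord0) HbK ltac:(lra) (proj1 Cp).
  rewrite pt_proj.
  have : 0 <= (N - 1) * ((p ord0 - t0) * (p ord0 - t0)) by apply: Rmult_le_pos.
  case: (u p) => //= s; lra.
- have := HM p (conj Hp0 Kp); have := HMa _ Kp.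
  have hq : de * de <= (p ord0 - t0) * (p ord0 - t0).
    have := Rsqr_abs (p ord0 - t0); rewrite /Rsqr => ->.
    have := Rabs_pos (p ord0 - t0); nra.
  have hN : (N - 1) * (de * de) = Rabs M + Rabs Ma + 1.
    by rewrite /N; field; lra.
  have h2 : (N - 1) * (de * de) <= (N - 1) * ((p ord0 - t0) * (p ord0 - t0)).
    by apply: Rmult_le_compat_l.
  have := Rle_abs M; have := Rle_abs Ma; have := Rabs_pos Ma.
  case: (u p) => //= s; lra.
Qed.
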